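(* Let $\mathcal{H}$ be any clustering method (a map assigning to every network $(X,A_X)$ an ultrametric on $X$) satisfying the Axiom of Value (A1) and the Axiom of Transformation (A2). Then for every network $(X,A_X)$, writing $u_X=\mathcal{H}(X,A_X)$, we have for all $x,x'\in X$ $$u^{NR}_X(x,x')\le u_X(x,x')\le u^R_X(x,x'),$$ where $$u^R_X(x,x')=\min_{C(x,x')}\max_{0\le i\le l-1}\max\big(A_X(x_i,x_{i+1}),A_X(x_{i+1},x_i)\big),$$ $$u^{NR}_X(x,x')=\max\Big(\min_{C(x,x')}\max_{0\le i\le l-1}A_X(x_i,x_{i+1}),\ \min_{C(x',x)}\max_{0\le i\le l-1}A_X(x_i,x_{i+1})\Big),$$ with minima taken over all chains $C(a,b)=[a=x_0,x_1,\dots,x_l=b]$ of nodes of $X$ from $a$ to $b$.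
   Context: A network is a pair $(X,A_X)$ with $X$ a finite nonempty set and $A_X:X\times X\to\mathbb{R}$ satisfying $A_X(x,x')\ge 0$ for all $x,x'$, with $A_X(x,x')=0$ iff $x=x'$; $A_X$ need not be symmetric nor satisfy the triangle inequality. An ultrametric on $X$ is a function $u_X:X\times X\to\mathbb{R}$ that is nonnegative, symmetric, satisfies $u_X(x,x')=0$ iff $x=x'$, and satisfies $u_X(x,x')\le\max\big(u_X(x,x''),u_X(x'',x')\big)$ for all $x,x',x''\in X$. Axiom of Value (A1): for every two-node network $X=\{p,q\}$ with $A_X(p,q)=\alpha$, $A_X(q,p)=\beta$ (with $\alpha,\beta>0$), the output ultrametric satisfies $u_X(p,q)=\max(\alpha,\beta)$. Axiom of Transformation (A2): for any two networks $(X,A_X)$, $(Y,A_Y)$ and any map $\phi:X\to Y$ with $A_X(x,x')\ge A_Y(\phi(x),\phi(x'))$ for all $x,x'\in X$, the output ultrametrics $u_X=\mathcal{H}(X,A_X)$ and $u_Y=\mathcal{H}(Y,A_Y)$ satisfy $u_X(x,x')\ge u_Y(\phi(x),\phi(x'))$ for all $x,x'\in X$. *)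

(* Defs.v *)
From HB Require Import structures.
From mathcomp Require Import all_boot all_order all_algebra.
From mathcomp Require Import boolp classical_sets reals.
Set Implicit Arguments. Unset Strict Implicit. Unset Printing Implicit Defensive.
Import Order.TTheory GRing.Theory Num.Theory.
Local Open Scope ring_scope.
Local Open Scope classical_set_scope.

Section Defs.
Variable R : realType.

Definition is_network (T : finType) (A : T -> T -> R) : Prop :=
  (0 < #|T|)%N /\ (forall x y, 0 <= A x y) /\ (forall x y, A x y = 0 <-> x = y).

Definition is_ultrametric (T : finType) (u : T -> T -> R) : Prop :=
  [/\ forall x y, 0 <= u x y,
      forall x y, u x y = u y x,
      forall x y, u x y = 0 <-> x = y &
      forall x y z, u x y <= Num.max (u x z) (u z y)].

Definition method := forall T : finType, (T -> T -> R) -> T -> T -> R.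

Definition outputs_ultrametrics (H : method) : Prop :=
  forall (T : finType) (A : T -> T -> R), is_network A -> is_ultrametric (H T A).

Definition axiom_value (H : method) : Prop :=
  forall (T : finType) (A : T -> T -> R), #|T| = 2%N -> is_network A ->
  forall p q : T, p != q -> H T A p q = Num.max (A p q) (A q p).

Definition axiom_transformation (H : method) : Prop :=
  forall (T T' : finType) (A : T -> T -> R) (A' : T' -> T' -> R) (phi : T -> T'),
  is_network A -> is_network A' ->
  (forall x x', A' (phi x) (phi x') <= A x x') ->
  forall x x', H T' A' (phi x) (phi x') <= H T A x x'.

(* A chain C(a,b) = [a = x_0, x_1, ..., x_l = b] is represented by a and the
   sequence s = [x_1; ...; x_l] with last a s = b. *)
Definition chains (T : finType) (a b : T) : set (seq T) := [set s | last a s = b].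

(* max_{0 <= i <= l-1} B x_i x_{i+1}  (0 for the trivial chain l = 0). *)
Definition chain_cost (T : finType) (B : T -> T -> R) (a : T) (s : seq T) : R :=
  \big[Num.max/0]_(v <- pairmap B a s) v.

(* min over all chains from a to b of chain_cost B (attained; written as inf). *)
Definition min_chain_cost (T : finType) (B : T -> T -> R) (a b : T) : R :=
  inf [set chain_cost B a s | s in chains a b].

Definition u_R (T : finType) (A : T -> T -> R) (x x' : T) : R :=
  min_chain_cost (fun y z => Num.max (A y z) (A z y)) x x'.

Definition u_NR (T : finType) (A : T -> T -> R) (x x' : T) : R :=
  Num.max (min_chain_cost A x x') (min_chain_cost A x' x).

End Defs.

(* Main.v *)
Require Import Defs.
From HB Require Import structures.
From mathcomp Require Import all_boot all_order all_algebra.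
From mathcomp Require Import boolp classical_sets reals.
Import Order.TTheory GRing.Theory Num.Theory.
Local Open Scope ring_scope.

Section S.
Variable R : realType.

Lemma chain_cost_cons (T : finType) (B : T -> T -> R) a y s :
  chain_cost B a (y :: s) = Num.max (B a y) (chain_cost B y s).
Proof. by rewrite /chain_cost /= big_cons. Qed.

Lemma chain_cost_nil (T : finType) (B : T -> T -> R) a : chain_cost B a [::] = 0.
Proof. by rewrite /chain_cost /= big_nil. Qed.

Lemma chain_cost_rcons_lt (T : finType) (B : T -> T -> R) a s z d :
  chain_cost B a s < d -> B (last a s) z < d -> chain_cost B a (rcons s z) < d.
Proof.
elim: s a => [|y s IH] a /=.
  rewrite chain_cost_nil => h0 hz; by rewrite chain_cost_cons chain_cost_nil gt_max hz h0.
rewrite !chain_cost_cons !gt_max => /andP[-> h] hz /=.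
exact: IH.
Qed.

Lemma chain_cost_ge0 (T : finType) (B : T -> T -> R) a s : 0 <= chain_cost B a s.
Proof.
elim: s a => [|y s IH] a; first by rewrite chain_cost_nil.
by rewrite chain_cost_cons le_max IH orbT.
Qed.

Lemma min_chain_lb (T : finType) (B : T -> T -> R) a b s :
  last a s = b -> min_chain_cost B a b <= chain_cost B a s.
Proof.
move=> hs; rewrite /min_chain_cost.
have hl : has_lbound [set chain_cost B a s | s in chains a b].
  by exists 0 => _ [t _ <-]; exact: chain_cost_ge0.
by apply: (ge_inf hl); exists s.
Qed.

Lemma min_chain_glb (T : finType) (B : T -> T -> R) a b v :
  (forall s, last a s = b -> v <= chain_cost B a s) -> v <= min_chain_cost B a b.
Proof.
move=> h; apply: lb_le_inf; first by exists (chain_cost B a [:: b]), [:: b].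
by move=> _ [s hs <-]; apply: h.
Qed.


Definition net2 (al be : R) (a b : bool) : R :=
  if a == b then 0 else if a then al else be.

Lemma net2_network al be : 0 < al -> 0 < be -> is_network (net2 al be).
Proof.
move=> ha hb; split; first by rewrite card_bool.
split.
  by case; case; rewrite /net2 //=; apply: ltW.
case; case; rewrite /net2 /=; split => // h.
- by move: ha; rewrite h ltxx.
- by move: hb; rewrite h ltxx.
Qed.

Lemma edge_bound (H : method R) :
  outputs_ultrametrics H -> axiom_value H -> axiom_transformation H ->
  forall (T : finType) (A : T -> T -> R), is_network A ->
  forall x y : T, H T A x y <= Num.max (A x y) (A y x).
Proof.
move=> hU hV hT T A hA x y.
have [_ [A0 Aeq]] := hA.
have [u0 _ ueq _] := hU T A hA.
have [<-|nxy] := eqVneq x y.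
  by rewrite (proj2 (ueq x x) erefl) le_max A0.
have pos : forall a b, a != b -> 0 < A a b.
  move=> a b nab; rewrite lt_neqAle A0 andbT; apply/eqP => h.
  by move/eqP: nab; apply; apply/Aeq.
have hN := net2_network _ _ (pos _ _ nxy) (pos y x (contra_neq (@esym _ _ _) nxy)).
have := hT bool T (net2 (A x y) (A y x)) A (fun b => if b then x else y) hN hA _ true false.
rewrite (hV bool _ (card_bool) hN true false isT) /=; apply.
case; case => //=; rewrite /net2 /= ?A0 //; by rewrite (proj2 (Aeq _ _) erefl).
Qed.


Lemma upper_bound (H : method R) :
  outputs_ultrametrics H -> axiom_value H -> axiom_transformation H ->
  forall (T : finType) (A : T -> T -> R), is_network A ->
  forall x x' : T, H T A x x' <= u_R A x x'.
Proof.
move=> hU hV hT T A hA x x'.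
have [u0 _ ueq utr] := hU T A hA.
apply: min_chain_glb => s <-.
elim: s x => [|y s IH] x /=.
  by rewrite chain_cost_nil (proj2 (ueq x x) erefl).
rewrite chain_cost_cons; apply: le_trans (utr x (last y s) y) _.
rewrite ge_max; apply/andP; split; rewrite le_max.
  by rewrite (@edge_bound H hU hV hT _ _ hA).
by rewrite IH orbT.
Qed.

Lemma lower_bound (H : method R) :
  outputs_ultrametrics H -> axiom_value H -> axiom_transformation H ->
  forall (T : finType) (A : T -> T -> R), is_network A ->
  forall x x' : T, min_chain_cost A x x' <= H T A x x'.
Proof.
move=> hU hV hT T A hA x x'.
have [_ [A0 Aeq]] := hA.
have [u0 _ ueq _] := hU T A hA.
set d := min_chain_cost A x x'.
have [d0|dpos] := leP d 0; first by apply: le_trans d0 (u0 _ _).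
have pos : forall a b, a != b -> 0 < A a b.
  move=> a b nab; rewrite lt_neqAle A0 andbT; apply/eqP => h.
  by move/eqP: nab; apply; apply/Aeq.
pose be := \big[Num.min/d]_(p : T * T | p.1 != p.2) A p.1 p.2.
have be0 : 0 < be.
  by apply: (big_ind (fun v => 0 < v)) => // [a b ha hb|[a b] /= hab];
    [rewrite lt_min ha hb | exact: pos].
have bed : be <= d.
  by apply: (big_rec (fun v => v <= d)) => // i v _ hv; rewrite ge_min hv orbT.
have beA : forall a b, a != b -> be <= A a b.
  move=> a b hab; rewrite /be (bigD1 (a, b)) //= ge_min lexx //.
pose phi (y : T) : bool := `[< exists s, last x s = y /\ chain_cost A x s < d >].
have phix : phi x by apply: asboolT; exists [::]; rewrite chain_cost_nil.
have phix' : phi x' = false.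
  apply: asboolF => -[s [hs hc]].
  by have := @min_chain_lb _ A _ _ _ hs; rewrite -/d => /(lt_le_trans hc); rewrite ltxx.
have hN := net2_network _ _ dpos be0.
have := hT T bool A (net2 d be) phi hA hN _ x x'.
rewrite phix phix' (hV bool _ (card_bool) hN true false isT) /net2 /=.
have -> : Num.max d be = d by apply/max_idPl.
apply=> y z; rewrite /net2.
case: eqP => [_|/eqP nyz]; first exact: A0.
case hy: (phi y).
  have hz : phi z = false by move: nyz; rewrite hy; case: (phi z).
  rewrite leNgt; apply/negP => hyz.
  move/asboolP: hy => [s [hs hc]].
  move: hz; rewrite /phi asboolT //; exists (rcons s z); split.
    by rewrite last_rcons.
  by apply: chain_cost_rcons_lt; rewrite ?hs.
by apply: beA; apply: contraNneq nyz => ->.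
Qed.

End S.

Theorem theorem2 (R : realType) (H : method R) :
  outputs_ultrametrics H -> axiom_value H -> axiom_transformation H ->
  forall (T : finType) (A : T -> T -> R), is_network A ->
  forall x x' : T, u_NR A x x' <= H T A x x' <= u_R A x x'.
Proof.
move=> hU hV hT T A hA x x'.
have [_ usym _ _] := hU T A hA.
rewrite (@upper_bound _ _ hU hV hT _ _ hA) andbT /u_NR ge_max.
by rewrite (@lower_bound _ _ hU hV hT _ _ hA) usym (@lower_bound _ _ hU hV hT _ _ hA).
Qed.
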